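(* Let $S$ be a nonempty set of graphs on $\Pi$, $A$ the closed-above model generated by $S$, and $r>0$. Then for every integer $i$ with $1\le i<\mathrm{eqdom}(S^r)$, $(i+(n-\mathrm{cov}_i(S^r)))$-set agreement is solvable in $r$ rounds on $A$.
   Context: Fix $\Pi=\{p_1,\dots,p_n\}$. A graph is a directed graph on $\Pi$ containing all self-loops; $Out_G(p)=\{q:(p,q)\in E(G)\}$, $In_G(p)=\{q:(q,p)\in E(G)\}$, $Out_G(P)=\bigcup_{p\in P}Out_G(p)$. Computation proceeds in failure-free, communication-closed rounds: in round $r$ a graph $G_r$ is chosen and each $p$ receives the round-$r$ messages of the processes in $In_{G_r}(p)$. $\uparrow G=\{H:E(H)\supseteq E(G)\}$; the closed-above model generated by $S$ allows exactly the executions whose round graphs each lie in $\bigcup_{G\in S}\uparrow G$. In $k$-set agreement each process starts with an input from a totally ordered set $V_{in}$ and must decide a value so that every decided value is some process's input and at most $k$ distinct values are decided; it is solvable in $r$ rounds if some algorithm guarantees this, with all processes deciding after $r$ rounds, in every allowed execution and input assignment. $\mathrm{eqdom}(G)=\min\{i\in[1,n]:\forall P\subseteq\Pi,\ |P|=i\Rightarrow Out_G(P)=\Pi\}$, $\mathrm{eqdom}(S)=\max_{G\in S}\mathrm{eqdom}(G)$, $\mathrm{cov}_i(G)=\min_{P\subseteq\Pi,|P|=i}|Out_G(P)|$, $\mathrm{cov}_i(S)=\min_{G\in S}\mathrm{cov}_i(G)$. The graph path product $G\otimes H$ has edge set $\{(u,v):\exists w,\ (u,w)\in E(G)\wedge(w,v)\in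 E(H)\}$, and $S^r=\{G_1\otimes\cdots\otimes G_r: G_1,\dots,G_r\in S\}$. *)

(* Defs.v *)
From HB Require Import structures.
From mathcomp Require Import all_boot all_order.
Set Implicit Arguments. Unset Strict Implicit. Unset Printing Implicit Defensive.

Definition graph (n : nat) := {set 'I_n * 'I_n}.

Definition is_graph n (G : graph n) : Prop := forall p : 'I_n, (p, p) \in G.

Definition Out n (G : graph n) (p : 'I_n) : {set 'I_n} := [set q | (p, q) \in G].
Definition OutS n (G : graph n) (P : {set 'I_n}) : {set 'I_n} :=
  \bigcup_(p in P) Out G p.

(* eqdom(G) = min { i in [1,n] | forall P, |P| = i -> Out_G(P) = Pi }
   (the default n is never used for graphs, since i = n always works). *)
Definition eqdom_pred n (G : graph n) (i : nat) : bool :=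
  [forall P : {set 'I_n}, (#|P| == i) ==> (OutS G P == setT)].
Definition eqdom n (G : graph n) : nat :=
  head n [seq i <- iota 1 n | eqdom_pred G i].
Definition eqdom_set n (S : {set graph n}) : nat := \max_(G in S) eqdom G.

(* cov_i(G) = min_{|P| = i} |Out_G(P)|;  cov_i(S) = min_{G in S} cov_i(G).
   (n is a neutral default: all values are <= n.) *)
Definition cov n (i : nat) (G : graph n) : nat :=
  \big[minn/n]_(P : {set 'I_n} | #|P| == i) #|OutS G P|.
Definition cov_set n (i : nat) (S : {set graph n}) : nat :=
  \big[minn/n]_(G in S) cov i G.

Definition gprod n (G H : graph n) : graph n :=
  [set e | [exists w : 'I_n, ((e.1, w) \in G) && ((w, e.2) \in H)]].

Definition gid n : graph n := [set e | e.1 == e.2].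

(* S^r = { G_1 (x) ... (x) G_r | G_j in S } (product is associative;
   S^0 = {identity graph}, S^1 = S). *)
Fixpoint Spow n (S : {set graph n}) (r : nat) : {set graph n} :=
  match r with
  | 0 => [set gid n]
  | r'.+1 => [set gprod G H | G in Spow S r', H in S]
  end.

Definition closed_above n (S : {set graph n}) (H : graph n) : bool :=
  [exists G in S, G \subset H].

Record algorithm (V : Type) (n : nat) : Type := Algorithm {
  State : Type;
  Msg : Type;
  init : 'I_n -> V -> State;
  send : 'I_n -> State -> Msg;
  trans : 'I_n -> State -> ('I_n -> option Msg) -> State;
  decide : 'I_n -> State -> V
}.

(* state of each process after t rounds, round j+1 using graph gs j *)
Fixpoint state_at V n (A : algorithm V n) (inp : 'I_n -> V)
  (gs : nat -> graph n) (t : nat) : 'I_n -> State A :=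
  match t with
  | 0 => fun p => @init _ _ A p (inp p)
  | t'.+1 => let s := state_at A inp gs t' in
      fun p => @trans _ _ A p (s p)
        (fun q => if (q, p) \in gs t' then Some (@send _ _ A q (s q)) else None)
  end.

Definition decision V n (A : algorithm V n) inp gs r (p : 'I_n) : V :=
  @decide _ _ A p (state_at A inp gs r p).

Definition kset_solvable (d : Order.disp_t) (V : orderType d) (n : nat)
  (S : {set graph n}) (k r : nat) : Prop :=
  exists A : algorithm V n,
    forall (inp : 'I_n -> V) (gs : nat -> graph n),
      (forall t, t < r -> closed_above S (gs t)) ->
      (forall p, exists q, decision A inp gs r p = inp q) /\
      size (undup [seq decision A inp gs r p | p <- enum 'I_n]) <= k.

(* Main.v *)
Require Import Defs.
From HB Require Import structures.
From mathcomp Require Import all_boot all_order.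
Import Order.TTheory.

Section Alg.
Variables (n : nat) (d : Order.disp_t) (V : orderType d).

Definition mstep (f : 'I_n -> option V) (q : 'I_n) (acc : V) : V :=
  match f q with Some m => if (m <= acc)%O then m else acc | None => acc end.

Definition mtrans (p : 'I_n) (s : V) (f : 'I_n -> option V) : V :=
  foldr (mstep f) s (enum 'I_n).

Definition malg : algorithm V n :=
  @Algorithm V n V V (fun _ v => v) (fun _ s => s) mtrans (fun _ s => s).

Lemma fold_le s f l : (foldr (mstep f) s l <= s)%O.
Proof.
elim: l => //= q l IH; rewrite /mstep; case: (f q) => [m|] //.
case: ifP => // h; exact: le_trans h IH.
Qed.

Lemma fold_le_m s f l q m : q \in l -> f q = Some m -> (foldr (mstep f) s l <= m)%O.
Proof.
elim: l => //= q' l IH; rewrite in_cons => /orP [/eqP <-|ql] fq.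
  rewrite /mstep fq; case: ifP => // /negbT; rewrite -ltNge => /ltW //.
rewrite /mstep; case: (f q') => [m'|]; last exact: IH.
case: ifP => h; last exact: IH.
exact: le_trans h (IH ql fq).
Qed.

Lemma fold_in s f l : foldr (mstep f) s l = s \/ exists q, f q = Some (foldr (mstep f) s l).
Proof.
elim: l => [|q l IH] /=; first by left.
rewrite /mstep; case E: (f q) => [m|] //; case: ifP => _ //.
by right; exists q.
Qed.

Fixpoint Hs (gs : nat -> graph n) (t : nat) : graph n :=
  match t with 0 => gid n | t'.+1 => gprod (Hs gs t') (gs t') end.

Lemma state_in inp gs t p : exists q, state_at malg inp gs t p = inp q.
Proof.
elim: t p => [|t IH] p /=; first by exists p.
rewrite /mtrans; case: (fold_in (state_at malg inp gs t p)
  (fun q => if (q, p) \in gs t then Some (state_at malg inp gs t q) else None)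
  (enum 'I_n)) => [->|[q]]; first exact: IH.
case: ifP => // _ [<-]; exact: IH.
Qed.

Lemma state_le inp gs t p q : (q, p) \in Hs gs t -> (state_at malg inp gs t p <= inp q)%O.
Proof.
elim: t p q => [|t IH] p q /=.
  by rewrite inE /= => /eqP ->.
rewrite inE /= => /existsP [w /andP [h1 h2]].
rewrite /mtrans; apply: le_trans (IH _ _ h1).
have := @fold_le_m (state_at malg inp gs t p) (fun q0 : 'I_n => if (q0, p) \in gs t then Some (state_at malg inp gs t q0) else None) (enum (ordinal n)) w (state_at malg inp gs t w) (mem_enum _ w).
move=> H; apply: H. by rewrite /= h2.
Qed.

Lemma gprod_sub (G G' H H' : graph n) : G \subset H -> G' \subset H' ->
  gprod G G' \subset gprod H H'.
Proof.
move=> /subsetP s1 /subsetP s2; apply/subsetP => e; rewrite !inE.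
move=> /existsP [w /andP [a b]]; apply/existsP; exists w.
by rewrite (s1 _ a) (s2 _ b).
Qed.

Lemma Hs_cover (S : {set graph n}) gs r : (forall t, t < r -> closed_above S (gs t)) ->
  exists2 G, G \in Spow S r & G \subset Hs gs r.
Proof.
elim: r => [|r IH] h; first by exists (gid n); rewrite ?inE.
have [G G1 G2] := IH (fun t ht => h t (ltnW ht)).
have /existsP [G' /andP [G'1 G'2]] := h r (ltnSn r).
exists (gprod G G'); first exact: imset2_f.
exact: gprod_sub.
Qed.

End Alg.

Lemma take_sub_card (T : finType) (A : {set T}) i : i <= #|A| ->
  exists2 P : {set T}, P \subset A & #|P| == i.
Proof.
move=> hi; exists [set x in take i (enum A)].
  by apply/subsetP => x; rewrite inE => /mem_take; rewrite mem_enum.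
rewrite cardsE; apply/eqP; move/card_uniqP: (take_uniq i (enum_uniq (mem A))) => ->.
by rewrite size_takel // -cardE.
Qed.

Lemma bigmin_le (I : finType) (P : pred I) (F : I -> nat) x j : P j ->
  \big[minn/x]_(k | P k) F k <= F j.
Proof.
move=> Pj; rewrite -big_filter.
have : j \in [seq k <- index_enum I | P k] by rewrite mem_filter Pj mem_index_enum.
elim: [seq k <- _ | _] => [//|a l IH]; rewrite inE big_cons => /orP [/eqP <-|jl].
  exact: geq_minl.
exact: leq_trans (geq_minr _ _) (IH jl).
Qed.

Theorem theorem8 (n : nat) (d : Order.disp_t) (V : orderType d)
  (S : {set graph n}) (hS : forall G, G \in S -> is_graph G) (hne : S != set0)
  (r : nat) (hr : 0 < r) (i : nat) (hi1 : 1 <= i)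
  (hi2 : i < eqdom_set (Spow S r)) :
  kset_solvable V S (i + (n - cov_set i (Spow S r))) r.
Proof.
exists (@malg n _ V) => inp gs hgs; split.
  move=> p; exact: state_in.
set dec := decision (@malg n _ V) inp gs r.
set s := undup _.
have [G GS GH] := @Hs_cover n S gs r hgs.
case: (leqP (size s) i) => hsi; first exact: leq_trans hsi (leq_addr _ _).
have us : uniq s := undup_uniq _.
set s' := sort <=%O s.
have ss' : sorted <%O s' by rewrite sort_lt_sorted.
have ps : perm_eq s' s by rewrite perm_sort.
have sz : size s' = size s by rewrite size_sort.
have i0 : 0 < size s by exact: leq_ltn_trans hsi.
have [x0 _] : exists x : V, x \in s by move: i0; case: (s) => [|y ys] // _; exists y; rewrite inE eqxx.
set t := nth x0 s' i.-1.
have hil : i.-1 < size s' by rewrite sz; apply: leq_ltn_trans hsi; apply: leq_pred.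
set P0 := [set q | (inp q <= t)%O].
have hP0 : i <= #|P0|.
  have -> : i = size (take i s') by rewrite size_takel // sz ltnW.
  rewrite cardE -(size_map inp).
  apply: uniq_leq_size; first by apply: take_uniq; rewrite sort_uniq.
  move=> x xin; have xs : x \in s' := mem_take xin.
  have := xs; rewrite (perm_mem ps) mem_undup => /mapP [p _ xe].
  have [q hq] := @state_in n d V inp gs r p.
  apply/mapP; exists q; last by rewrite -hq xe.
  rewrite mem_enum inE -hq; have -> : state_at (malg n d V) inp gs r p = x by rewrite xe.
  have kx := index_ltn xin.
  have ks : index x s' < size s' by rewrite index_mem.
  rewrite -(nth_index x0 xs) /t.
  rewrite (lt_sorted_leq_nth x0 ss') ?inE //.
  by rewrite -ltnS prednK.
have [P PP0 /eqP Pi] := @take_sub_card _ _ _ hP0.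
set High := [set p | (t < dec p)%O].
have hHigh : High \subset ~: OutS G P.
  apply/subsetP => p; rewrite !inE; apply: contraL => /bigcupP [q qP].
  rewrite inE => qpG; rewrite -leNgt.
  apply: le_trans (@state_le n d V inp gs r _ _ (subsetP GH _ qpG)) _.
  by move: (subsetP PP0 q qP); rewrite inE.
have hcov : cov_set i (Spow S r) <= #|OutS G P|.
  rewrite /cov_set; apply: leq_trans (@bigmin_le _ (fun K => K \in Spow S r) (cov i) n G GS) _.
  by rewrite /cov; apply: bigmin_le; rewrite Pi.
have hHn : #|High| <= n - #|OutS G P|.
  apply: leq_trans (subset_leq_card hHigh) _.
  by rewrite -[X in X - _](card_ord n) -(cardsC (OutS G P)) addKn.
rewrite -(count_predC (fun x => x <= t)%O s).
apply: leq_add.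
  rewrite -(permP ps).
  rewrite -(cat_take_drop i s') count_cat.
  rewrite -[X in _ <= X]addn0; apply: leq_add.
    by apply: leq_trans (count_size _ _) _; rewrite size_take; case: ifP => // /negbT; rewrite -leqNgt.
  rewrite leqn0 eqn0Ngt -has_count; apply/hasPn => x xin.
  have [k kl ->] : exists2 k, k < size (drop i s') & x = nth x0 (drop i s') k.
    by exists (index x (drop i s')); rewrite ?index_mem ?nth_index.
  rewrite nth_drop size_drop in kl *.
  rewrite /t (lt_sorted_leq_nth x0 ss') ?inE //; last by rewrite -ltn_subRL.
  by rewrite -ltnNge; apply: leq_trans (leq_addr k i); rewrite -ltnS prednK.
apply: leq_trans (leq_trans _ hHn) (leq_sub2l _ hcov).
rewrite -size_filter cardE -(size_map dec).
apply: uniq_leq_size; first exact: filter_uniq.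
move=> x; rewrite mem_filter /= -ltNge => /andP [tx]; rewrite mem_undup => /mapP [p _ xe].
apply/mapP; exists p => //; rewrite mem_enum inE -xe //.
Qed.
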